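(* Let $n \geq 1$ and $z \geq 2$ be integers, and let $\epsilon > 0$ be a constant. Let $\mathbf{f}_1^{(0)}, \dots, \mathbf{f}_n^{(0)}$ be arbitrary probability vectors in $\mathbb{R}^z$. For $t \geq 1$ define recursively, for all $i, j \in \{1,\dots,n\}$, $$p_{i,j}^{(t)} = \frac{\alpha_i^{(t)}}{\epsilon + D\left(\mathbf{f}_i^{(t-1)}, \mathbf{f}_j^{(t-1)}\right)}, \qquad \mathbf{f}_i^{(t)} = \sum_{j=1}^n p_{i,j}^{(t)} \mathbf{f}_j^{(t-1)},$$ where $\alpha_i^{(t)} > 0$ is the normalizing constant chosen so that $\sum_{j=1}^n p_{i,j}^{(t)} = 1$, and $D(\mathbf{u}, \mathbf{v}) = \sqrt{\frac{1}{z}\sum_{k=1}^{z} (u_k - v_k)^2}$. Then for every $i, j \in \{1,\dots,n\}$, $p_{i,j}^{(t)} \to \frac{1}{n}$ as $t \to \infty$.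
   Context: The vectors $\mathbf{f}_i^{(t)}$ represent the probabilistic opinion of expert $i$ after $t$ revisions; $p_{i,j}^{(t)}$ is the weight expert $i$ assigns to expert $j$'s opinion at revision $t$. *)

(* Defs.v *)
From HB Require Import structures.
From mathcomp Require Import all_boot all_order all_algebra.
From mathcomp Require Import all_classical all_reals all_analysis.
Set Implicit Arguments. Unset Strict Implicit. Unset Printing Implicit Defensive.
Import Order.TTheory GRing.Theory Num.Theory.
Local Open Scope ring_scope.

Section Opinion.
Variables (R : realType) (n z : nat) (eps : R).

Definition Dist (u v : 'I_z -> R) : R :=
  Num.sqrt (z%:R^-1 * \sum_(k < z) (u k - v k) ^+ 2).

Definition prob_vec (u : 'I_z -> R) : Prop :=
  (forall k, 0 <= u k) /\ \sum_(k < z) u k = 1.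

Definition weights (f : 'I_n -> 'I_z -> R) (i j : 'I_n) : R :=
  (eps + Dist (f i) (f j))^-1 / \sum_(k < n) (eps + Dist (f i) (f k))^-1.

Definition revise (f : 'I_n -> 'I_z -> R) : 'I_n -> 'I_z -> R :=
  fun i k => \sum_(j < n) weights f i j * f j k.

Fixpoint opinion (f0 : 'I_n -> 'I_z -> R) (t : nat) : 'I_n -> 'I_z -> R :=
  match t with
  | 0 => f0
  | t'.+1 => revise (opinion f0 t')
  end.

(* p^{(t)}_{i,j} for t >= 1 (value at t = 0 is a dummy, irrelevant for limits) *)
Definition pw (f0 : 'I_n -> 'I_z -> R) (t : nat) (i j : 'I_n) : R :=
  weights (opinion f0 t.-1) i j.

End Opinion.

(* Main.v *)
Require Import Defs.
From HB Require Import structures.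
From mathcomp Require Import all_boot all_order all_algebra.
From mathcomp Require Import all_classical all_reals all_analysis.
From mathcomp Require Import lra ring.
Import Order.TTheory GRing.Theory Num.Theory.
Import numFieldNormedType.Exports.
Local Open Scope classical_set_scope.
Local Open Scope ring_scope.
Set Implicit Arguments. Unset Strict Implicit.

Section Aux.
Variable R : realType.

Lemma sum_delta n (F : 'I_n -> R) j : \sum_m F m * (j == m)%:R = F j.
Proof.
rewrite (bigD1 j) //= eqxx mulr1 big1 ?addr0 // => m hm.
by rewrite eq_sym (negbTE hm) mulr0.
Qed.

Lemma contract n (p q x : 'I_n -> R) (r : R) :
  (forall j, 0 <= p j) -> (forall j, 0 <= q j) ->
  \sum_j p j = 1 -> \sum_j q j = 1 -> (forall j m, `|x j - x m| <= r) ->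
  `|\sum_j p j * x j - \sum_j q j * x j| <= r * (1 - \sum_j p j * q j).
Proof.
move=> p0 q0 hp hq hx.
have E : \sum_j p j * x j - \sum_m q m * x m =
         \sum_j \sum_m p j * q m * (x j - x m).
  transitivity (\sum_j \sum_m p j * q m * x j - \sum_j \sum_m p j * q m * x m).
    congr (_ - _).
      apply: eq_bigr => j _; rewrite -[LHS]mulr1 -hq mulr_sumr.
      by apply: eq_bigr => m _; ring.
    rewrite exchange_big /=; apply: eq_bigr => m _.
    rewrite -[LHS]mul1r -hp mulr_suml; by apply: eq_bigr => j _; ring.
  rewrite -sumrB; apply: eq_bigr => j _; rewrite -sumrB.
  by apply: eq_bigr => m _; ring.
rewrite E; apply: (le_trans (ler_norm_sum _ _ _)).
apply: (@le_trans _ _ (\sum_j \sum_m (r * (p j * q m) - r * (p j * q m * (j == m)%:R)))).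
  apply: ler_sum => j _; apply: (le_trans (ler_norm_sum _ _ _)).
  apply: ler_sum => m _.
  rewrite normrM ger0_norm ?mulr_ge0 //.
  have hpq : 0 <= p j * q m by rewrite mulr_ge0.
  case: eqP => [<-|_]; first by rewrite subrr normr0 !mulr0 mulr1 subrr.
  rewrite /= !mulr0 subr0 mulrC; exact: ler_wpM2r.
rewrite le_eqVlt; apply/orP; left; apply/eqP.
transitivity (\sum_j (r * (p j * \sum_m q m) - r * (p j * q j))).
  apply: eq_bigr => j _; rewrite sumrB -!mulr_sumr mulr_sumr; congr (_ - r * _).
  exact: (@sum_delta _ (fun m => p j * q m)).
under eq_bigr do rewrite hq mulr1.
rewrite sumrB -!mulr_sumr hp mulrBr mulr1.
by [].
Qed.

Lemma inv_bnd (eps r d : R) : 0 < eps -> 0 <= d <= r ->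
  (eps + r)^-1 <= (eps + d)^-1 <= eps^-1.
Proof.
move=> he /andP[d0 dr].
rewrite !lef_pV2 ?posrE; lra.
Qed.

Lemma S_bnd n (eps r : R) (d : 'I_n -> R) : 0 < eps -> (forall k, 0 <= d k <= r) ->
  n%:R * (eps + r)^-1 <= \sum_k (eps + d k)^-1 <= n%:R * eps^-1.
Proof.
move=> he hd.
have c1 : \sum_(k < n) (eps + r)^-1 = n%:R * (eps + r)^-1
  by rewrite sumr_const card_ord mulr_natl.
have c2 : \sum_(k < n) eps^-1 = n%:R * eps^-1
  by rewrite sumr_const card_ord mulr_natl.
rewrite -c1 -c2; apply/andP; split; apply: ler_sum => k _;
  by case/andP: (inv_bnd he (hd k)).
Qed.

Lemma w_bnd n (eps r : R) (d : 'I_n -> R) j : 0 < eps -> (forall k, 0 <= d k <= r) ->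
  0 <= (eps + d j)^-1 / \sum_k (eps + d k)^-1 /\
  eps / (n%:R * (eps + r)) <= (eps + d j)^-1 / \sum_k (eps + d k)^-1 /\
  (eps + d j)^-1 / \sum_k (eps + d k)^-1 <= (eps + r) / (n%:R * eps).
Proof.
move=> he hd.
have /andP[d0 dr] := hd j.
have r0 : 0 <= r by lra.
have n0 : 0 < n%:R :> R by rewrite ltr0n; exact: (leq_ltn_trans (leq0n j) (ltn_ord j)).
have /andP[S1 S2] := S_bnd he hd.
have /andP[a1 a2] := inv_bnd he (hd j).
have er : 0 < eps + r by lra.
have Sp : 0 < \sum_k (eps + d k)^-1.
  apply: lt_le_trans S1; rewrite mulr_gt0 // invr_gt0 //.
have a0 : 0 < (eps + d j)^-1 by rewrite invr_gt0; lra.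
split; first by rewrite divr_ge0 ?ltW.
split.
  rewrite ler_pdivlMr //.
  apply: le_trans a1.
  apply: (@le_trans _ _ (eps / (n%:R * (eps + r)) * (n%:R * eps^-1))).
    by rewrite ler_wpM2l // divr_ge0 ?mulr_ge0 ?ltW.
  rewrite le_eqVlt; apply/orP; left; apply/eqP; field.
  by rewrite (gt_eqF er) (gt_eqF he) (gt_eqF n0).
rewrite ler_pdivrMr //.
apply: (le_trans a2).
apply: (@le_trans _ _ ((eps + r) / (n%:R * eps) * (n%:R / (eps + r)))); last first.
  by rewrite ler_wpM2l // divr_ge0 ?mulr_ge0 ?ltW.
rewrite le_eqVlt; apply/orP; left; apply/eqP; field.
by rewrite (gt_eqF er) (gt_eqF he) (gt_eqF n0).
Qed.

Lemma w_sum n (eps : R) (d : 'I_n -> R) : 0 < eps -> (forall k, 0 <= d k) ->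
  (0 < n)%N -> \sum_j (eps + d j)^-1 / \sum_k (eps + d k)^-1 = 1.
Proof.
move=> he hd n0.
rewrite -mulr_suml mulfV //; apply: lt0r_neq0.
rewrite (bigD1 (Ordinal n0)) //=; apply: ltr_pwDl.
  by rewrite invr_gt0; have := hd (Ordinal n0); lra.
by apply: sumr_ge0 => k _; rewrite invr_ge0; have := hd k; lra.
Qed.


Lemma le_sum1 n (G : 'I_n -> R) i : (forall j, 0 <= G j) -> G i <= \sum_j G j.
Proof. by move=> h; rewrite (bigD1 i) //= lerDl sumr_ge0. Qed.

Lemma Dist_ge0 z (u v : 'I_z -> R) : 0 <= Dist u v.
Proof. exact: sqrtr_ge0. Qed.

Lemma Dist_bnd z (u v : 'I_z -> R) r : (0 < z)%N -> 0 <= r ->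
  (forall k, `|u k - v k| <= r) -> Dist u v <= r.
Proof.
move=> z0 r0 h; rewrite /Dist -(ger0_norm r0) -sqrtr_sqr ler_sqrt ?sqr_ge0 //.
have zp : 0 < z%:R :> R by rewrite ltr0n.
apply: (@le_trans _ _ (z%:R^-1 * (z%:R * r ^+ 2))).
  apply: ler_wpM2l; first by rewrite invr_ge0 ltW.
  have -> : z%:R * r ^+ 2 = \sum_(k < z) r ^+ 2 by rewrite sumr_const card_ord mulr_natl.
  apply: ler_sum => k _; have := h k; rewrite ler_norml => /andP[h1 h2]; nra.
rewrite mulrA mulVf ?mul1r // gt_eqF //.
Qed.
End Aux.

Theorem corollary1 (R : realType) (n z : nat) (eps : R)
  (hn : (1 <= n)%N) (hz : (2 <= z)%N) (heps : 0 < eps)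
  (f0 : 'I_n -> 'I_z -> R) (hf0 : forall i, prob_vec (f0 i)) :
  forall i j : 'I_n,
    ((fun t : nat => pw eps f0 t i j) : R^nat) @ \oo --> (n%:R : R)^-1.
Proof.
move=> i0 j0.
have z0 : (0 < z)%N by apply: leq_trans hz.
set F := opinion eps f0.
set W := \sum_i \sum_l \sum_k `|f0 i k - f0 l k|.
have W0 : 0 <= W.
  by apply: sumr_ge0 => ? _; apply: sumr_ge0 => ? _; apply: sumr_ge0 => ? _.
have np : 0 < n%:R :> R by rewrite ltr0n.
have n1 : 1 <= n%:R :> R by rewrite ler1n.
set del := eps / (n%:R * (eps + W)).
have d0 : 0 < del by rewrite divr_gt0 // mulr_gt0 //; lra.
have d1 : del <= 1.
  rewrite ler_pdivrMr ?mul1r; last by rewrite mulr_gt0 //; lra.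
  nra.
set c := 1 - del ^+ 2.
have c0 : 0 <= c by rewrite /c expr2; nra.
have c1 : c <= 1 by rewrite /c expr2; nra.
have cW t : 0 <= c ^+ t * W by rewrite mulr_ge0 ?exprn_ge0.
have cW1 t : c ^+ t * W <= W by rewrite ler_piMl ?exprn_ile1.
have H : forall t i l k, `|F t i k - F t l k| <= c ^+ t * W.
  elim=> [|t IH] i l k.
    rewrite expr0 mul1r /W /F /=.
    apply: (le_trans _ (le_sum1 i _)); last by move=> ?; apply: sumr_ge0 => ? _; apply: sumr_ge0 => ? _.
    apply: (le_trans _ (le_sum1 l _)); last by move=> ?; apply: sumr_ge0 => ? _.
    exact: (le_sum1 k).
  have hd : forall a k, 0 <= Dist (F t a) (F t k) <= W.
    move=> a k'; rewrite Dist_ge0 /=; apply: le_trans (cW1 t).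
    exact: Dist_bnd.
  have wb := fun a b => w_bnd b heps (hd a).
  have ws := fun a => w_sum heps (fun k => Dist_ge0 (F t a) (F t k)) hn.
  have -> : F t.+1 i k = \sum_j weights eps (F t) i j * F t j k by [].
  have -> : F t.+1 l k = \sum_j weights eps (F t) l j * F t j k by [].
  apply: (le_trans (@contract R n (weights eps (F t) i) (weights eps (F t) l) (fun j => F t j k) (c ^+ t * W) _ _ _ _ (fun j m => IH j m k))).
  - by move=> j; case: (wb i j).
  - by move=> j; case: (wb l j).
  - exact: (ws i).
  - exact: (ws l).
  apply: (@le_trans _ _ (c ^+ t * W * c)); last by rewrite exprSr mulrAC.
  apply: ler_wpM2l; first exact: cW.
  rewrite lerD2l lerN2.
  apply: (le_trans _ (le_sum1 i _)); last first.
    by move=> j; rewrite mulr_ge0 //; [case: (wb i j) | case: (wb l j)].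
  have [_ [hi _]] := wb i i; have [_ [hl _]] := wb l i.
  rewrite expr2; apply: ler_pM => //; exact: ltW.
have Db : forall t a b, 0 <= Dist (F t a) (F t b) <= c ^+ t * W.
  move=> t a b; rewrite Dist_ge0 /=; exact: (Dist_bnd z0 (cW t) (fun k => H t a b k)).
have clt : `|c| < 1 by rewrite ger0_norm // /c; nra.
have hg : (fun t => c ^+ t * W) @ \oo --> 0.
  rewrite -(mul0r W); apply: cvgM; [exact: cvg_expr | exact: cvg_cst].
rewrite -cvg_shiftS /=.
apply: (@squeeze_cvgr _ _ _ _ (fun t => eps / (n%:R * (eps + c ^+ t * W)))
         (fun t => (eps + c ^+ t * W) / (n%:R * eps))).
- apply: nearW => t.
  have [_ [h1 h2]] := w_bnd j0 heps (fun k => Db t i0 k).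
  by apply/andP; split.
- have -> : (n%:R : R)^-1 = eps / (n%:R * (eps + 0)).
    by rewrite addr0; field; rewrite (gt_eqF heps) (gt_eqF np).
  apply: cvgM; first exact: cvg_cst.
  apply: cvgV; first by rewrite addr0 mulf_neq0 // gt_eqF.
  apply: cvgM; first exact: cvg_cst.
  apply: cvgD; [exact: cvg_cst | exact: hg].
- have -> : (n%:R : R)^-1 = (eps + 0) / (n%:R * eps).
    by rewrite addr0; field; rewrite (gt_eqF heps) (gt_eqF np).
  apply: cvgM; last exact: cvg_cst.
  apply: cvgD; [exact: cvg_cst | exact: hg].
Qed.
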